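(* Let $0\le q\in L_1^{loc}(\mathbb{R})$ and assume there is $a\in(0,\infty)$ with $\inf_{x\in\mathbb{R}}\int_{x-a}^{x+a}q(t)\,dt>0$. Suppose there exist $\alpha\ge1$, $\beta>0$, $X>0$ such that for all $|x|\ge X$, $\frac1\alpha\le\frac{d(t)}{d(x)}\le\alpha$ whenever $|t-x|\le\beta$. Then for each $s\in(0,\infty)$ there is $c(s)\in(0,\infty)$ such that $$J_s(x):=\int_x^\infty\exp\Big(-s\int_x^t q(\xi)\,d\xi\Big)dt\le c(s)\,d(x),\quad x\in\mathbb{R}.$$
   Context: $d(x)=\inf\{d>0:\int_{x-d}^{x+d}q(t)\,dt=2\}$ for $x\in\mathbb{R}$. *)

(* Defs.v *)
From HB Require Import structures.
From mathcomp Require Import all_boot all_order all_algebra.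
From mathcomp Require Import all_classical all_reals all_analysis.
Set Implicit Arguments. Unset Strict Implicit. Unset Printing Implicit Defensive.
Import Order.TTheory GRing.Theory Num.Theory.
Import numFieldNormedType.Exports.
Local Open Scope classical_set_scope.
Local Open Scope ring_scope.

Definition dfun (R : realType) (q : R -> R) (x : R) : R :=
  inf [set d : R | 0 < d /\
        (\int[lebesgue_measure]_(t in `[(x - d)%R, (x + d)%R]) (q t)%:E = 2%:E)%E].

Definition Jfun (R : realType) (q : R -> R) (s x : R) : \bar R :=
  (\int[lebesgue_measure]_(t in `[x, +oo[)
     (expR (- (s * \int[lebesgue_measure]_(xi in `[x, t]) q xi)%R))%:E)%E.

(* Main.v *)
Require Import Defs.
From HB Require Import structures.
From mathcomp Require Import all_boot all_order all_algebra.
From mathcomp Require Import all_classical all_reals all_analysis.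
From mathcomp Require Import ring lra measurable_realfun.
Import Order.TTheory GRing.Theory Num.Theory.
Import numFieldNormedType.Exports.
Local Open Scope classical_set_scope.
Local Open Scope ring_scope.

Section Expint.
Context {R : realType}.
Notation mu := (@lebesgue_measure R).


Lemma expint (A l x : R) : 0 <= A -> 0 < l ->
  (\int[mu]_(t in `[x, +oo[) (A * expR (- (l * (t - x))))%:E = (A / l)%:E)%E.
Proof.
move=> A0 l0.
pose f t := A * expR (- (l * (t - x))).
pose F t := - (A / l) * expR (- (l * (t - x))).
have df t : derivable f t 1 by rewrite /f; exact: ex_derive.
have cf : continuous f.
  by move=> t; apply: differentiable_continuous; apply/derivable1_diffP.
have dF (t : R) : is_derive t (1:R) F (f t).
  apply: is_derive_eq.
  rewrite /f subr0 /GRing.scale /= mulr1.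
  have l0' : l != 0 by rewrite gt_eqF.
  by field.
have cF : continuous F.
  move=> u; apply: differentiable_continuous; apply/derivable1_diffP.
  by case: (dF u).
rewrite (@ge0_continuous_FTC2y _ f F x 0).
- by rewrite /F subrr mulr0 oppr0 expR0 mulr1 sub0e EFinN oppeK.
- by move=> t _; rewrite mulr_ge0 // expR_ge0.
- exact: continuous_subspaceT.
- rewrite -(mulr0 (- (A / l))); apply: cvgM; first exact: cvg_cst.
  have h1 : (l * (t - x)) @[t --> +oo] --> +oo by exact/gt0_cvgMry/cvg_addrr.
  exact: (cvg_comp _ _ h1 (@cvgr_expR R)).
- by move=> t _; exact: ex_derive.
- exact/cvg_at_right_filter/cF.
- by move=> t _; rewrite derive1E; exact: derive_val.
Qed.

Lemma cont_exp (A l x : R) : continuous (fun t : R => A * expR (- (l * (t - x)))).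
Proof.
have df t : derivable (fun t : R => A * expR (- (l * (t - x)))) t 1 by exact: ex_derive.
by move=> t; apply: differentiable_continuous; apply/derivable1_diffP.
Qed.
End Expint.

Section Infra.
Context {R : realType} (q : R -> R).
Hypothesis q_ge0 : forall t, 0 <= q t.
Hypothesis q_loc : locally_integrable setT q.
Notation mu := (@lebesgue_measure R).

Definition II (a b : R) := \int[mu]_(t in `[a, b]) q t.

Lemma intq (a b : R) : mu.-integrable `[a, b] (EFin \o q).
Proof.
case: q_loc => mq _ H; apply/integrableP; split.
  apply/measurable_realfun.measurable_EFinP; exact: measurable_funS mq.
exact: H (@segment_compact _ a b).
Qed.

Lemma intq_itv (i : interval R) (a b : R) : [set` i] `<=` `[a, b] ->
  mu.-integrable [set` i] (EFin \o q).
Proof. by move=> sub; apply: integrableS (intq a b). Qed.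

Lemma II_ge0 a b : 0 <= II a b.
Proof. by apply: Rintegral_ge0. Qed.

Lemma II_add a b c : a <= b -> b <= c -> II a c = II a b + II b c.
Proof.
move=> ab bc.
have := @Rintegral_itvB R q (BLeft a) (BRight c) b (intq a c).
rewrite !bnd_simp => /(_ ab bc) h.
rewrite /II -[X in _ = _ + X]Rintegral_itv_obnd_cbnd; last first.
  by apply: (@intq_itv _ a c); apply: subset_itv; rewrite bnd_simp.
by rewrite -h addrC subrK.
Qed.

Lemma II_pt a : II a a = 0.
Proof. by rewrite /II set_itv1 Rintegral_set1. Qed.

Lemma II_mono a b c d : a <= c -> d <= b -> II c d <= II a b.
Proof.
move=> ac db.
have [cd|dc] := leP c d.
  rewrite (@II_add a c b ac (le_trans cd db)) (@II_add c d b cd db).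
  by rewrite addrC -addrA lerDl addr_ge0 // II_ge0.
by rewrite /II set_itv_ge ?Rintegral_set0 -?leNgt ?bnd_simp ?(ltW dc) // II_ge0.
Qed.

Lemma II_abscont a b e : 0 < e -> exists2 del : R, 0 < del &
  forall c d, a <= c -> d <= b -> d - c < del -> II c d < e.
Proof.
move=> e0.
have intr : mu.-integrable setT (EFin \o (q \_ `[a, b])).
  by rewrite -restrict_EFin; apply/integrable_restrict => //=; rewrite setTI; exact: intq.
have [del [del0 H]] := integral_normr_continuous intr e0.
exists del => // c d ac db dc.
have [cd|ltdc] := leP c d; last first.
  by rewrite /II set_itv_ge ?Rintegral_set0 -?leNgt ?bnd_simp ?(ltW ltdc).
have := H `[c, d]%classic (measurable_itv _).
move=> H1; move: H1; rewrite [X in (X < _)%E -> _]lebesgue_measure_itv/= lte_fin.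
have [lcd|] := ltP c d; last first.
  move=> dlec; have -> : c = d by apply/le_anti; rewrite cd dlec.
  by rewrite II_pt.
rewrite -EFinD lte_fin => /(_ dc).
congr (_ < _); apply: eq_Rintegral => x; rewrite inE /= in_itv /= => /andP[cx xd].
rewrite patchE ifT ?ger0_norm //; last first.
  by rewrite inE /= in_itv /= (le_trans ac cx) (le_trans xd db).
Qed.


Lemma EII a b : (\int[mu]_(t in `[a, b]) (q t)%:E)%E = (II a b)%:E.
Proof. by rewrite /II /Rintegral fineK //; exact: integrable_fin_num (intq a b). Qed.

End Infra.


Section S3.
Context {R : realType} (q : R -> R).
Hypothesis q_ge0 : forall t, 0 <= q t.
Hypothesis q_loc : locally_integrable setT q.
Notation II := (@II R q).
Notation II_add := (@II_add R q q_loc).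
Notation II_ge0 := (@II_ge0 R q q_ge0).
Notation II_mono := (@II_mono R q q_ge0 q_loc).

Lemma lin_lb (x L v W : R) : 0 < L -> 0 <= v ->
  (forall k : nat, k.+1%:R * L <= W -> v <= II (x + k%:R * L) (x + k.+1%:R * L)) ->
  forall t, x <= t -> t - x <= W -> v * ((t - x) / L - 1) <= II x t.
Proof.
move=> L0 v0 H.
have P : forall n : nat, n%:R * L <= W -> n%:R * v <= II x (x + n%:R * L).
  elim=> [|n IH] hn.
    by rewrite mul0r II_ge0.
  have hn' : n%:R * L <= W.
    apply: le_trans hn. rewrite ler_pM2r //. rewrite ler_nat. done.
  idtac "A".
  have e1 : x <= x + n%:R * L by rewrite lerDl mulr_ge0 // ltW.
  idtac "B".
  have e2 : x + n%:R * L <= x + n.+1%:R * L by rewrite lerD2l ler_pM2r // ler_nat.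
  idtac "C".
  rewrite (II_add _ _ _ e1 e2).

  have -> : n.+1%:R * v = n%:R * v + v by rewrite -nat1r mulrDl mul1r addrC.
  by apply: lerD; [exact: IH| exact: H].
move=> t xt tW.
have h0 : 0 <= (t - x) / L by rewrite divr_ge0 // ?subr_ge0 // ltW.
idtac "E".
set n := Num.truncn ((t - x) / L).
have hn1 : n%:R <= (t - x) / L by rewrite truncn_le h0.
idtac "F".
have hn2 : (t - x) / L < n.+1%:R := truncnS_gt _.
idtac "G".
have nL : n%:R * L <= t - x by rewrite -ler_pdivlMr.
idtac "H".
have e3 : x + n%:R * L <= t by rewrite -lerBrDl.
apply: (le_trans _ (II_mono _ _ _ _ (lexx x) e3)).
idtac "I".
apply: le_trans (P n (le_trans nL tW)).
idtac "J".
rewrite mulrC ler_wpM2r // lerBlDr.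
by rewrite natr1; exact: ltW.
Qed.
End S3.


Section S4.
Context {R : realType} (q : R -> R).
Hypothesis q_ge0 : forall t, 0 <= q t.
Hypothesis q_loc : locally_integrable setT q.
Notation II := (@II R q).
Notation II_add := (@II_add R q q_loc).
Notation II_ge0 := (@II_ge0 R q q_ge0).
Notation II_mono := (@II_mono R q q_ge0 q_loc).
Notation II_pt := (@II_pt R q).
Notation II_abscont := (@II_abscont R q q_ge0 q_loc).
Notation EII := (@EII R q q_loc).
Notation lin_lb := (@lin_lb R q q_ge0 q_loc).
Variables (a m : R).
Hypotheses (a0 : 0 < a) (m0 : 0 < m) (hm : forall y, m <= II (y - a) (y + a)).

Lemma glob_lb x t : x <= t -> m * ((t - x) / (2 * a) - 1) <= II x t.
Proof.
move=> xt; apply: (@lin_lb x (2 * a) m (t - x)) => //.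
- by rewrite mulr_gt0.
- exact: ltW.
- move=> k _; have := hm (x + k%:R * (2 * a) + a).
  have -> : x + k%:R * (2 * a) + a - a = x + k%:R * (2 * a) by ring.
  have -> : x + k%:R * (2 * a) + a + a = x + k.+1%:R * (2 * a).
    by rewrite -natr1; ring.
  done.
Qed.

Definition Sd x := [set d : R | 0 < d /\
        (\int[lebesgue_measure]_(t in `[(x - d)%R, (x + d)%R]) (q t)%:E = 2%:E)%E].

Lemma Sd_E x d : Sd x d <-> 0 < d /\ II (x - d) (x + d) = 2.
Proof.
rewrite /Sd /= EII; split => -[h1 h2]; split => //.
  by case: h2.
by rewrite h2.
Qed.

Lemma dfunE x : dfun q x = inf (Sd x).
Proof. by []. Qed.

Lemma sym_diff x u u' : 0 <= u -> u <= u' ->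
  II (x - u') (x + u') = II (x - u') (x - u) + II (x - u) (x + u) + II (x + u) (x + u').
Proof.
move=> u0 uu.
have e1 : x - u' <= x - u by rewrite lerD2l lerN2.
have e2 : x - u <= x + u by rewrite lerD2l (le_trans _ u0) // oppr_le0.
have e3 : x + u <= x + u' by rewrite lerD2l.
by rewrite (II_add _ _ _ e1 (le_trans e2 e3)) (II_add _ _ _ e2 e3) addrA.
Qed.

Lemma hp_cont x : continuous (fun r : R => II (x - `|r|) (x + `|r|)).
Proof.
move=> r0; apply/(@cvgrPdist_lt _ R^o) => e e0.
have e20 : 0 < e / 2 by rewrite divr_gt0.
have [del del0 Hd] := II_abscont (x - (`|r0| + 1)) (x + (`|r0| + 1)) (e / 2) e20.
have key : forall u u', 0 <= u -> u <= u' -> u' <= `|r0| + 1 -> u' - u < del ->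
    `|II (x - u) (x + u) - II (x - u') (x + u')| < e.
  move=> u u' u0 uu u'B dl.
  rewrite (sym_diff x u u' u0 uu) distrC.
  have -> : II (x - u') (x - u) + II (x - u) (x + u) + II (x + u) (x + u') -
      II (x - u) (x + u) = II (x - u') (x - u) + II (x + u) (x + u') by ring.
  rewrite ger0_norm ?addr_ge0 ?II_ge0 //.
  have u'0 : 0 <= u' by exact: le_trans uu.
  rewrite (splitr e); apply: ltrD; apply: Hd; rewrite ?normr_ge0; try lra.
have md0 : 0 < Num.min del 1 by rewrite lt_min del0 ltr01.
near=> t.
have : ball r0 (Num.min del 1) t by near: t; first [exact: (@near_ball _ R^o r0 _ md0) | exact: (@near_ball _ R r0 _ md0) | apply: nbhsx_ballx].
rewrite /ball /=; rewrite lt_min => /andP[h1 h2].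
have h3 : `| `|t| - `|r0| | <= `|r0 - t| by rewrite (distrC r0) ler_dist_dist.
have n1 := normr_ge0 t; have n2 := normr_ge0 r0.
move: h3; rewrite ler_norml => /andP[h4 h5].
have [rt|tr] := leP `|r0| `|t|.
  by apply: key; lra.
by rewrite distrC; apply: key; lra.
Unshelve. all: by end_near. Qed.

Lemma Sd_ne x : Sd x !=set0.
Proof.
have [R0 R0E] : {R0 : R | R0 = a * (2 / m + 2)} by exists (a * (2 / m + 2)).
have R00 : 0 < R0 by rewrite R0E mulr_gt0 // addr_gt0 // divr_gt0.
have hR : 2 <= II (x - R0) (x + R0).
  have xR : x - R0 <= x + R0 by lra.
  have := @glob_lb (x - R0) (x + R0) xR.
  have -> : (x + R0 - (x - R0)) / (2 * a) - 1 = 2 / m + 1.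
    rewrite R0E; have a0' : a != 0 by rewrite gt_eqF.
    have m0' : m != 0 by rewrite gt_eqF. by field; rewrite m0' a0'.
  have -> : m * (2 / m + 1) = 2 + m.
    have m0' : m != 0 by rewrite gt_eqF. by field.
  by move=> h; apply: le_trans h; rewrite lerDl ltW.
have hp0 : II (x - `|0 : R|) (x + `|0 : R|) = 0.
  have -> : `|0 : R| = 0 by apply/eqP; rewrite normr_eq0.
  by rewrite subr0 addr0 II_pt.
have := @IVT R (fun r : R => II (x - `|r|) (x + `|r|)) 0 R0 2 (ltW R00)
  (continuous_subspaceT (hp_cont x)).
rewrite hp0 gtr0_norm //.
have hR0 : 0 <= II (x - R0) (x + R0) by exact: II_ge0.
case.
  rewrite (min_idPl hR0) (max_idPr hR0) hR andbT; exact: ler0n.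
move=> c; rewrite in_itv /= => /andP[c0 cR] hc.
exists c; apply/Sd_E; split; last by rewrite -(ger0_norm c0).
rewrite lt_neqAle c0 andbT; apply/eqP => c0'.
by move: hc; rewrite -c0' hp0 => /eqP; rewrite eq_sym pnatr_eq0.
Qed.

Lemma d_ge0 x : 0 <= dfun q x.
Proof.
rewrite dfunE; apply: lb_le_inf; first exact: Sd_ne.
by move=> y /Sd_E [y0 _]; exact: ltW.
Qed.

Lemma d_lt x r : dfun q x < r -> 2 <= II (x - r) (x + r).
Proof.
rewrite dfunE => H; have [y Sy yr] := inf_lt (Sd_ne x) H.
case/Sd_E: Sy => y0 <-; apply: II_mono; lra.
Qed.

Lemma d_lb X : exists2 del, 0 < del & forall x, `|x| <= X -> del <= dfun q x.
Proof.
have [dl dl0 Hd] := II_abscont (- X - 1) (X + 1) 2 (ltr0Sn _ 1).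
exists (Num.min (dl / 2) 1); first by rewrite lt_min ltr01 divr_gt0.
move=> x; rewrite ler_norml => /andP[xl xr].
rewrite dfunE; apply: lb_le_inf; first exact: Sd_ne.
move=> y /Sd_E [y0 hy].
rewrite leNgt; apply/negP; rewrite lt_min => /andP[y1 y2].
have e1 : - X - 1 <= x - y by lra.
have e2 : x + y <= X + 1 by lra.
have e3 : x + y - (x - y) < dl by lra.
have := Hd (x - y) (x + y) e1 e2 e3.
by rewrite hy ltxx.
Qed.

End S4.


Section S5.
Context {R : realType} (q : R -> R).
Hypothesis q_ge0 : forall t, 0 <= q t.
Hypothesis q_loc : locally_integrable setT q.
Notation mu := (@lebesgue_measure R).
Notation II := (@II R q).
Notation II_add := (@II_add R q q_loc).
Notation II_ge0 := (@II_ge0 R q q_ge0).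
Notation II_mono := (@II_mono R q q_ge0 q_loc).

Lemma expNinv (u : R) : 0 < u -> expR (- u) <= u^-1.
Proof.
move=> u0; rewrite expRN lef_pV2 ?posrE ?expR_gt0 //.
have := expR_ge1Dx u; lra.
Qed.

Lemma meas_exp (A l x : R) :
  measurable_fun `[x, +oo[ (EFin \o (fun t : R => A * expR (- (l * (t - x))))).
Proof.
apply/measurable_realfun.measurable_EFinP; apply: measurable_funTS.
apply: measurable_realfun.continuous_measurable_fun; exact: cont_exp.
Qed.

Lemma J_meas (x s : R) : measurable_fun `[x, +oo[ (EFin \o (fun t : R => expR (- (s * II x t)))).
Proof.
apply/measurable_realfun.measurable_EFinP.
have -> : (fun t => expR (- (s * II x t))) = (fun u => expR (- (s * u))) \o (II x) by [].
apply: measurableT_comp.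
  apply: measurable_realfun.continuous_measurable_fun.
  have df u : derivable (fun u : R => expR (- (s * u))) u 1 by exact: ex_derive.
  by move=> u; apply: differentiable_continuous; apply/derivable1_diffP.
apply: measurable_realfun.nondecreasing_measurable => // u v uv.
exact: II_mono (lexx x) uv.
Qed.

Lemma J_le2 x s (A1 l1 A2 l2 : R) : 0 <= A1 -> 0 < l1 -> 0 <= A2 -> 0 < l2 ->
  (forall t, x <= t -> expR (- (s * II x t)) <=
      A1 * expR (- (l1 * (t - x))) + A2 * expR (- (l2 * (t - x)))) ->
  (Jfun q s x <= (A1 / l1 + A2 / l2)%:E)%E.
Proof.
move=> A10 l10 A20 l20 H.
rewrite EFinD -(@expint _ A1 l1 x A10 l10) -(@expint _ A2 l2 x A20 l20).
rewrite -ge0_integralD //; last 4 first.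
- by move=> t _; rewrite lee_fin mulr_ge0 // expR_ge0.
- exact: meas_exp.
- by move=> t _; rewrite lee_fin mulr_ge0 // expR_ge0.
- exact: meas_exp.
rewrite /Jfun; apply: ge0_le_integral => //.
- exact: J_meas.
- by apply: emeasurable_funD; exact: meas_exp.
- move=> t; rewrite /= in_itv /= andbT => xt.
  by rewrite -EFinD lee_fin; exact: H.
Qed.

End S5.



Theorem lemma4p4 (R : realType) (q : R -> R)
  (q_ge0 : forall t, 0 <= q t)
  (q_loc : locally_integrable setT q)
  (q_inf : exists a : R, 0 < a /\
     0 < inf (range (fun x : R =>
            \int[lebesgue_measure]_(t in `[x - a, x + a]) q t)))
  (d_reg : exists alpha beta X : R, 1 <= alpha /\ 0 < beta /\ 0 < X /\
     forall x t : R, X <= `|x| -> `|t - x| <= beta ->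
       alpha^-1 <= dfun q t / dfun q x <= alpha) :
  forall s : R, 0 < s ->
    exists c : R, 0 < c /\
      forall x : R, (Jfun q s x <= (c * dfun q x)%:E)%E.
Proof.
move=> s s0.
have [a [a0 m0]] := q_inf.
set m := inf _ in m0.
have hm : forall y, m <= II q (y - a) (y + a).
  move=> y; apply: ge_inf; last by exists y.
  by exists 0 => _ [z _ <-]; exact: II_ge0.
have [alpha [beta [X [al1 [be0 [X0 Hd]]]]]] := d_reg.
have al0 : 0 < alpha by lra.
have a0' : a != 0 by rewrite gt_eqF.
have m0' : m != 0 by rewrite gt_eqF.
have s0' : s != 0 by rewrite gt_eqF.
have be0' : beta != 0 by rewrite gt_eqF.
have al0' : alpha != 0 by rewrite gt_eqF.
have GL := @glob_lb R q q_ge0 q_loc a m a0 m0 hm.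
have DL := @d_lt R q q_ge0 q_loc a m a0 m0 hm.
have DG := @d_ge0 R q q_ge0 q_loc a m a0 m0 hm.
have [del del0 Hdel] := @d_lb R q q_ge0 q_loc a m a0 m0 hm X.
have sm0 : 0 < s * m by rewrite mulr_gt0.
have l20 : 0 < s * m / (2 * a) by rewrite divr_gt0 // mulr_gt0.
pose C := expR (s * m) / (s * m / (2 * a)).
have C0 : 0 < C by rewrite divr_gt0 // expR_gt0.
pose K := expR (2 * s + s * m + s * m * beta / (2 * a)).
have K0 : 0 < K by rewrite expR_gt0.
pose c1 := 2 * alpha * (expR (2 * s) / s + K / (s * m / (2 * a)) / (s * beta)).
have c10 : 0 < c1.
  rewrite /c1 mulr_gt0 ?mulr_gt0 // addr_gt0 // ?divr_gt0 ?expR_gt0 ?mulr_gt0 //.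
have Cd0 : 0 < C / del by rewrite divr_gt0.
exists (c1 + C / del); split; first by rewrite addr_gt0.
move=> x.
have dx0' := DG x.
have [hx|hx] := leP X `|x|; last first.
  have dxl : del <= dfun q x by apply: Hdel; exact: ltW.
  apply: le_trans (@J_le2 R q q_ge0 q_loc x s (expR (s * m)) (s * m / (2 * a))
     0 1 (expR_ge0 _) l20 (lexx 0) ltr01 _) _.
    move=> t xt; rewrite mul0r addr0 -expRD ler_expR.
    have := GL x t xt.
    have -> : s * m / (2 * a) * (t - x) = s * (m * ((t - x) / (2 * a))).
      by field.
    move=> h.
    have -> : s * m + - (s * (m * ((t - x) / (2 * a)))) =
      - (s * (m * ((t - x) / (2 * a) - 1))) by ring.
    by rewrite lerN2 ler_pM2l.
  rewrite mul0r addr0 lee_fin -/C.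
  have h1 : C <= C / del * dfun q x.
    by rewrite mulrAC ler_pdivlMr // ler_pM2l.
  apply: le_trans h1 _; rewrite mulrDl lerDr mulr_ge0 // ltW //.
have H0 := Hd x x hx ltac:(by rewrite subrr normr0 ltW).
have dx0 : 0 < dfun q x.
  rewrite lt_neqAle dx0' andbT; apply/negP => /eqP dx.
  move: H0; rewrite -dx mul0r => /andP[h _].
  have : 0 < alpha^-1 by rewrite invr_gt0.
  by rewrite ltNge h.
have ad0 : 0 < alpha * dfun q x by rewrite mulr_gt0.
pose r := 2 * (alpha * dfun q x).
have r0 : 0 < r by rewrite /r mulr_gt0.
have r0' : r != 0 by rewrite gt_eqF.
have hc : forall c, `|c - x| <= beta -> 2 <= II q (c - r) (c + r).
  move=> c hcx; apply: DL.
  have := Hd x c hx hcx => /andP[_ h].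
  rewrite ler_pdivrMr // in h.
  rewrite /r; lra.
have loc : forall t, x <= t -> t - x <= beta -> 2 * ((t - x) / (2 * r) - 1) <= II q x t.
  apply: (@lin_lb R q q_ge0 q_loc x (2 * r) 2 beta) => //.
  - by rewrite mulr_gt0.
  - move=> k hk; have := hc (x + k%:R * (2 * r) + r).
    have -> : x + k%:R * (2 * r) + r - r = x + k%:R * (2 * r) by ring.
    have -> : x + k%:R * (2 * r) + r + r = x + k.+1%:R * (2 * r).
      by rewrite -natr1; ring.
    apply.
    have -> : x + k%:R * (2 * r) + r - x = k%:R * (2 * r) + r by ring.
    have hk0 : 0 <= k%:R * (2 * r) by rewrite mulr_ge0 // mulr_ge0 // ltW.
    rewrite ger0_norm; last by rewrite addr_ge0 // ltW.
    move: hk; rewrite -natr1 mulrDl mul1r; lra.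
pose A2 := K * expR (- (s * beta / r)).
have A20 : 0 <= A2 by rewrite mulr_ge0 ?expR_ge0 // ltW.
have l10 : 0 < s / r by rewrite divr_gt0.
apply: le_trans (@J_le2 R q q_ge0 q_loc x s (expR (2 * s)) (s / r)
     A2 (s * m / (2 * a)) (expR_ge0 _) l10 A20 l20 _) _.
  move=> t xt.
  have p1 : 0 <= expR (2 * s) * expR (- (s / r * (t - x))) by rewrite mulr_ge0 // expR_ge0.
  have p2 : 0 <= A2 * expR (- (s * m / (2 * a) * (t - x))) by rewrite mulr_ge0 // expR_ge0.
  have [tb|tb] := leP (t - x) beta.
    rewrite -[leLHS]addr0; apply: lerD; last exact: p2.
    rewrite -expRD ler_expR.
    have h := loc t xt tb.
    have -> : 2 * s + - (s / r * (t - x)) = - (s * (2 * ((t - x) / (2 * r) - 1))).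
      field; by rewrite ?a0' ?r0' ?m0' ?s0' ?be0' ?al0' ?dx0''.
    by rewrite lerN2 ler_pM2l.
  rewrite -[leLHS]add0r; apply: lerD; first exact: p1.
  have xb : x <= x + beta by rewrite lerDl ltW.
  have bt : x + beta <= t by lra.
  rewrite (@II_add R q q_loc x (x + beta) t xb bt).
  have h1 := loc (x + beta) xb ltac:(by rewrite addrAC subrr add0r).
  have h2 := GL (x + beta) t bt.
  rewrite /A2 /K -!expRD ler_expR.
  have -> : 2 * s + s * m + s * m * beta / (2 * a) + - (s * beta / r) +
      - (s * m / (2 * a) * (t - x)) =
    - (s * (2 * ((x + beta - x) / (2 * r) - 1) + m * ((t - (x + beta)) / (2 * a) - 1))).
    field; by rewrite ?a0' ?r0' ?m0' ?s0' ?be0' ?al0' ?dx0''.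
  rewrite lerN2 ler_pM2l //; exact: lerD.
rewrite lee_fin.
have e1 : A2 / (s * m / (2 * a)) <= K * (s * beta / r)^-1 / (s * m / (2 * a)).
  rewrite ler_pM2r ?invr_gt0 // /A2 ler_pM2l //.
  by apply: expNinv; rewrite divr_gt0 // mulr_gt0.
apply: le_trans (lerD (lexx _) e1) _.
have -> : expR (2 * s) / (s / r) + K * (s * beta / r)^-1 / (s * m / (2 * a)) =
    c1 * dfun q x.
  rewrite /c1 /r; have dx0'' : dfun q x != 0 by rewrite gt_eqF.
  field; by rewrite ?a0' ?r0' ?m0' ?s0' ?be0' ?al0' ?dx0''.
by rewrite mulrDl lerDl mulr_ge0 // ltW.
Qed.
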